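(* For every $\alpha\in\Lambda$ and $x\in\mathbb R^3$, $$\nabla\mathscr W_\alpha(x)=(1-\xi_4)^{1/2}\Big(\mathscr V_\alpha(\xi)-\tfrac12\mathscr Y_\alpha(\xi)\hat\xi\Big),$$ where $\xi=(\xi_1,\xi_2,\xi_3,\xi_4)=\pi^{-1}(x)\in\mathbb S^3$, $\hat\xi=(\xi_1,\xi_2,\xi_3)$, $(\phi,\theta,\chi)$ are the spherical coordinates of $\xi$, and $$\mathscr V_\alpha(\xi)=(1-\cos\chi)\begin{pmatrix}-\sin\phi&\cos\phi\cos\theta&-\cos\phi\sin\theta\\ \cos\phi&\sin\phi\cos\theta&-\sin\phi\sin\theta\\ 0&-\sin\theta&-\cos\theta\end{pmatrix}\begin{pmatrix}\frac{1}{\sin\theta\sin\chi}\frac{\partial\mathscr Y_\alpha}{\partial\phi}(\xi)\\ \frac{1}{\sin\chi}\frac{\partial\mathscr Y_\alpha}{\partial\theta}(\xi)\\ \frac{\partial\mathscr Y_\alpha}{\partial\chi}(\xi)\end{pmatrix}.$$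
   Context: Points of $\mathbb S^3\subset\mathbb R^4$ are written in spherical coordinates $\xi=(\sin\theta\cos\phi\sin\chi,\sin\theta\sin\phi\sin\chi,\cos\theta\sin\chi,\cos\chi)$, $\phi\in[0,2\pi)$, $\theta,\chi\in[0,\pi]$; $\partial\mathscr Y_\alpha/\partial\phi$, $\partial\mathscr Y_\alpha/\partial\theta$, $\partial\mathscr Y_\alpha/\partial\chi$ denote the derivatives of $\mathscr Y_\alpha$ regarded as a function of $(\phi,\theta,\chi)$. $\pi^{-1}(x)=\big(\frac{2x_1}{|x|^2+1},\frac{2x_2}{|x|^2+1},\frac{2x_3}{|x|^2+1},\frac{|x|^2-1}{|x|^2+1}\big)$ is the inverse stereographic projection. Index set: $\Lambda=\{(k,\ell,m)\in\mathbb N^2\times\mathbb Z:0\le\ell\le k,\ -\ell\le m\le\ell\}$. $T_n$ is the Chebyshev polynomial of the first kind ($T_n(\cos t)=\cos(nt)$), $T_n^{(j)}$ its $j$-th derivative. $P_\ell^m(t)=\frac{(-1)^m}{2^\ell\ell!}(1-t^2)^{m/2}\frac{d^{\ell+m}}{dt^{\ell+m}}(t^2-1)^\ell$, $K_\ell^m=(-1)^m\sqrt{\frac{(\ell-m)!}{(\ell+m)!}}P_\ell^m$, $Y_{\ell,m}(\phi,\theta)=\sqrt{\frac{2\ell+1}{2\pi}}K_\ell^{|m|}(\cos\theta)y_m(\phi)$ with $y_m=\cos(m\phi)$ ($m\ge1$), $1/\sqrt2$ ($m=0$), $\sin(|m|\phi)$ ($m\le-1$). For $\alpha=(k,\ell,m)\in\Lambda$,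 $a_{k,\ell}=\frac{(k+1)\pi}{2}\frac{(k+\ell+1)!}{(k-\ell)!}$, $\mathscr Y_\alpha(\xi)=a_{k,\ell}^{-1/2}(\sin\chi)^\ell T^{(\ell+1)}_{k+1}(\cos\chi)Y_{\ell,m}(\phi,\theta)$, and $\mathscr W_\alpha(x)=\big(\frac{2}{|x|^2+1}\big)^{1/2}\mathscr Y_\alpha(\pi^{-1}(x))$. *)

(* Defs.v *)
From Stdlib Require Import Reals ZArith ClassicalEpsilon.
From Coquelicot Require Import Coquelicot.
Open Scope R_scope.

(* Chebyshev polynomial of the first kind, as a real function:
   T_0 = 1, T_1 = t, T_{n+2} = 2 t T_{n+1} - T_n  (so T_n(cos s) = cos(n s)). *)
Fixpoint cheb_pair (n : nat) (t : R) : R * R :=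
  match n with
  | O => (1, t)
  | S n' => let p := cheb_pair n' t in (snd p, 2 * t * snd p - fst p)
  end.
Definition chebT (n : nat) (t : R) : R := fst (cheb_pair n t).

Definition chebT_der (n j : nat) (t : R) : R := Derive_n (chebT n) j t.

Definition assocP (l m : nat) (t : R) : R :=
  (-1) ^ m / (2 ^ l * INR (fact l)) * (sqrt (1 - t ^ 2)) ^ m
  * Derive_n (fun s => (s ^ 2 - 1) ^ l) (l + m) t.

Definition legK (l m : nat) (t : R) : R :=
  (-1) ^ m * sqrt (INR (fact (l - m)) / INR (fact (l + m))) * assocP l m t.

Definition ym (m : Z) (phi : R) : R :=
  if (0 <? m)%Z then cos (IZR m * phi)
  else if (m =? 0)%Z then / sqrt 2
  else sin (IZR (Z.abs m) * phi).

Definition Ylm (l : nat) (m : Z) (phi theta : R) : R :=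
  sqrt ((2 * INR l + 1) / (2 * PI)) * legK l (Z.abs_nat m) (cos theta) * ym m phi.

Definition a_kl (k l : nat) : R :=
  (INR k + 1) * PI / 2 * (INR (fact (k + l + 1)) / INR (fact (k - l))).

(* scrY_alpha regarded as a function of the spherical coordinates (phi,theta,chi) *)
Definition Ysph (k l : nat) (m : Z) (phi theta chi : R) : R :=
  / sqrt (a_kl k l) * (sin chi) ^ l * chebT_der (k + 1) (l + 1) (cos chi)
  * Ylm l m phi theta.

Definition sph (phi theta chi : R) : R * R * R * R :=
  (sin theta * cos phi * sin chi, sin theta * sin phi * sin chi,
   cos theta * sin chi, cos chi).

Definition sph_range (phi theta chi : R) : Prop :=
  0 <= phi < 2 * PI /\ 0 <= theta <= PI /\ 0 <= chi <= PI.

Definition is_sph_coords (xi : R * R * R * R) (phi theta chi : R) : Prop :=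
  sph_range phi theta chi /\ sph phi theta chi = xi.

Definition sph_coords (xi : R * R * R * R) : R * R * R :=
  epsilon (inhabits (0, 0, 0))
    (fun c => let '(p, t, c') := c in is_sph_coords xi p t c').

Definition Yfun (k l : nat) (m : Z) (xi : R * R * R * R) : R :=
  let '(p, t, c) := sph_coords xi in Ysph k l m p t c.

Definition inv_stereo (x1 x2 x3 : R) : R * R * R * R :=
  let n2 := x1 ^ 2 + x2 ^ 2 + x3 ^ 2 in
  (2 * x1 / (n2 + 1), 2 * x2 / (n2 + 1), 2 * x3 / (n2 + 1), (n2 - 1) / (n2 + 1)).

Definition Wfun (k l : nat) (m : Z) (x1 x2 x3 : R) : R :=
  sqrt (2 / (x1 ^ 2 + x2 ^ 2 + x3 ^ 2 + 1)) * Yfun k l m (inv_stereo x1 x2 x3).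

Definition Vvec (k l : nat) (m : Z) (phi theta chi : R) : R * R * R :=
  let v1 := / (sin theta * sin chi) * Derive (fun p => Ysph k l m p theta chi) phi in
  let v2 := / sin chi * Derive (fun t => Ysph k l m phi t chi) theta in
  let v3 := Derive (fun c => Ysph k l m phi theta c) chi in
  let s := 1 - cos chi in
  (s * (- sin phi * v1 + cos phi * cos theta * v2 - cos phi * sin theta * v3),
   s * (cos phi * v1 + sin phi * cos theta * v2 - sin phi * sin theta * v3),
   s * (0 * v1 - sin theta * v2 - cos theta * v3)).

(* Main.v *)
Require Import Defs.
From Stdlib Require Import Reals ZArith.
From Coquelicot Require Import Coquelicot.
From Stdlib Require Import Lra Lia List ClassicalEpsilon.
Open Scope R_scope.
Fixpoint peval (p : list R) (x : R) : R :=
  match p with nil => 0 | a :: q => a + x * peval q x end.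
Fixpoint padd (p q : list R) : list R :=
  match p, q with
  | nil, _ => q | _, nil => p
  | a :: p', b :: q' => (a + b) :: padd p' q' end.
Lemma padd_ok p q x : peval (padd p q) x = peval p x + peval q x.
Proof. revert q; induction p as [|a p IH]; intros [|b q]; simpl; try ring.
 rewrite IH; ring. Qed.
Definition pscal (c : R) (p : list R) := map (fun a => c * a) p.
Lemma pscal_ok c p x : peval (pscal c p) x = c * peval p x.
Proof. induction p as [|a p IH]; simpl; try ring. rewrite IH; ring. Qed.
Fixpoint pmul (p q : list R) : list R :=
  match p with nil => nil | a :: p' => padd (pscal a q) (0 :: pmul p' q) end.
Lemma pmul_ok p q x : peval (pmul p q) x = peval p x * peval q x.
Proof. induction p as [|a p IH]; simpl; try ring.
 rewrite padd_ok, pscal_ok; simpl; rewrite IH; ring. Qed.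

Definition IsPoly (f : R -> R) := exists p, forall x, f x = peval p x.

Lemma IsPoly_ext f g : (forall x, f x = g x) -> IsPoly f -> IsPoly g.
Proof. intros H [p Hp]; exists p; intros; rewrite <- H; auto. Qed.
Lemma IsPoly_const c : IsPoly (fun _ => c).
Proof. exists (c :: nil); intros; simpl; ring. Qed.
Lemma IsPoly_id : IsPoly (fun x => x).
Proof. exists (0 :: 1 :: nil); intros; simpl; ring. Qed.
Lemma IsPoly_add f g : IsPoly f -> IsPoly g -> IsPoly (fun x => f x + g x).
Proof. intros [p Hp] [q Hq]; exists (padd p q); intros; rewrite padd_ok, Hp, Hq; auto. Qed.
Lemma IsPoly_mul f g : IsPoly f -> IsPoly g -> IsPoly (fun x => f x * g x).
Proof. intros [p Hp] [q Hq]; exists (pmul p q); intros; rewrite pmul_ok, Hp, Hq; auto. Qed.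
Lemma IsPoly_pow f n : IsPoly f -> IsPoly (fun x => f x ^ n).
Proof. intros Hf; induction n as [|n IH]; simpl.
 apply IsPoly_const. apply IsPoly_mul; auto. Qed.

Lemma peval_deriv p : forall x, ex_derive (peval p) x /\
  exists q, forall x, Derive (peval p) x = peval q x.
Proof.
 induction p as [|a p IH]; intros x.
 - simpl. split. apply ex_derive_const. exists nil; intros; simpl. apply Derive_const.
 - destruct (IH x) as [_ [q Hq]].
   assert (Hd : forall y, is_derive (peval (a :: p)) y (peval p y + y * peval q y)).
   { intros y. simpl. rewrite <- Hq. destruct (IH y) as [He _].
     apply Derive_correct in He.
     replace (peval p y + y * Derive (peval p) y) with (0 + (1 * peval p y + y * Derive (peval p) y)) by ring.
     apply (is_derive_plus (fun _ : R => a) (fun t => t * peval p t)).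
     apply (@is_derive_const R_AbsRing R_NormedModule).
     apply (is_derive_mult (fun t => t) (peval p)). apply (@is_derive_id R_AbsRing). exact He.
     intros; apply Rmult_comm. }
   split. eexists; apply Hd.
   exists (padd p (0 :: q)). intros y. rewrite (is_derive_unique _ _ _ (Hd y)). rewrite padd_ok. simpl.
   ring.
Qed.

Lemma IsPoly_ex_derive f x : IsPoly f -> ex_derive f x.
Proof. intros [p Hp]. apply ex_derive_ext with (peval p). intros; auto.
 apply peval_deriv. Qed.
Lemma IsPoly_Derive f : IsPoly f -> IsPoly (Derive f).
Proof. intros [p Hp]. destruct (peval_deriv p 0) as [_ [q Hq]]. exists q.
 intros x. rewrite <- Hq. apply Derive_ext. auto. Qed.
Lemma IsPoly_Derive_n f n : IsPoly f -> IsPoly (Derive_n f n).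
Proof. intros Hf; induction n as [|n IH]; simpl. auto.
 apply IsPoly_Derive in IH. exact IH. Qed.
Lemma Dn_is_derive f n x : IsPoly f -> is_derive (Derive_n f n) x (Derive_n f (S n) x).
Proof. intros Hf. simpl. apply Derive_correct. apply IsPoly_ex_derive. apply IsPoly_Derive_n; auto. Qed.

Lemma cheb_poly n : IsPoly (fun t => fst (cheb_pair n t)) /\ IsPoly (fun t => snd (cheb_pair n t)).
Proof. induction n as [|n [IH1 IH2]]; simpl.
 - split. apply IsPoly_const. apply IsPoly_id.
 - split. auto.
   apply IsPoly_ext with (fun t => 2 * t * snd (cheb_pair n t) + (-1) * fst (cheb_pair n t)).
   intros; ring.
   apply IsPoly_add. apply IsPoly_mul. apply IsPoly_mul. apply IsPoly_const. apply IsPoly_id. auto.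
   apply IsPoly_mul. apply IsPoly_const. auto.
Qed.

Lemma mult_angle p q : cos p = cos q -> sin p = sin q -> forall n,
  cos (INR n * p) = cos (INR n * q) /\ sin (INR n * p) = sin (INR n * q).
Proof. intros Hc Hs n; induction n as [|n [IH1 IH2]].
 - simpl. rewrite !Rmult_0_l. auto.
 - rewrite S_INR. replace ((INR n + 1) * p) with (INR n * p + p) by ring.
   replace ((INR n + 1) * q) with (INR n * q + q) by ring.
   rewrite !cos_plus, !sin_plus, IH1, IH2, Hc, Hs. auto.
Qed.

Lemma ym_cs m p q : cos p = cos q -> sin p = sin q -> ym m p = ym m q.
Proof. intros Hc Hs. unfold ym.
 destruct (0 <? m)%Z eqn:E1.
 - apply Z.ltb_lt in E1. rewrite <- (Z2Nat.id m) by lia.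
   rewrite <- INR_IZR_INZ. apply mult_angle; auto.
 - destruct (m =? 0)%Z. auto.
   rewrite <- (Z2Nat.id (Z.abs m)) by lia.
   rewrite <- INR_IZR_INZ. apply mult_angle; auto.
Qed.

Lemma ym_ex_derive m x : ex_derive (ym m) x.
Proof. unfold ym. destruct (0 <? m)%Z. auto_derive; auto.
 destruct (m =? 0)%Z. auto_derive; auto. auto_derive; auto. Qed.


Lemma IsPoly_sq l : IsPoly (fun s => (s * (s * 1) - 1) ^ l).
Proof. apply IsPoly_pow. apply IsPoly_ext with (fun s => s * (s * 1) + (-1)).
 intros; ring. apply IsPoly_add. apply IsPoly_mul. apply IsPoly_id.
 apply IsPoly_mul. apply IsPoly_id. apply IsPoly_const. apply IsPoly_const. Qed.

Lemma legK_ex_derive l M u : -1 < u < 1 -> ex_derive (legK l M) u.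
Proof. intros Hu. unfold legK, assocP. auto_derive. repeat split.
 nra. apply IsPoly_ex_derive, IsPoly_Derive_n, IsPoly_sq. Qed.

Lemma chebT_poly n : IsPoly (chebT n).
Proof. apply (cheb_poly n). Qed.

Definition Cf (k l : nat) (c : R) := sin c ^ l * chebT_der (k + 1) (l + 1) (cos c).

Lemma Cf_ex_derive k l c : ex_derive (Cf k l) c.
Proof. unfold Cf, chebT_der. auto_derive. repeat split.
 apply IsPoly_ex_derive, IsPoly_Derive_n, chebT_poly. Qed.

Definition KK k l := / sqrt (a_kl k l) * sqrt ((2 * INR l + 1) / (2 * PI)).

Lemma Ysph_eq k l m p t c : Ysph k l m p t c =
  KK k l * ym m p * legK l (Z.abs_nat m) (cos t) * Cf k l c.
Proof. unfold Ysph, Ylm, KK, Cf. ring. Qed.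

Lemma angle_exists a b : a ^ 2 + b ^ 2 = 1 ->
  exists p, 0 <= p < 2 * PI /\ cos p = a /\ sin p = b.
Proof. intros H.
 assert (Ha : -1 <= a <= 1) by nra.
 destruct (Rle_or_lt 0 b) as [Hb|Hb].
 - exists (acos a). pose proof (acos_bound a). pose proof PI_RGT_0.
   split. lra. split. apply cos_acos; auto.
   rewrite sin_acos by auto. rewrite <- (sqrt_pow2 b Hb). f_equal. unfold Rsqr. nra.
 - assert (Ha' : -1 < a < 1) by nra.
   exists (2 * PI - acos a). pose proof (acos_bound_lt a Ha'). pose proof PI_RGT_0.
   split. lra. split.
   + rewrite cos_minus, cos_2PI, sin_2PI, cos_acos by auto. ring.
   + rewrite sin_minus, cos_2PI, sin_2PI, sin_acos by auto.
     replace b with (- (-b)) by ring. rewrite <- (sqrt_pow2 (-b)) by lra.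
     replace (1 - a²) with ((-b)^2) by (unfold Rsqr; nra). ring.
Qed.

Lemma sph_inj a b c d p t x : 0 <= t <= PI -> 0 <= x <= PI ->
  sph p t x = (a, b, c, d) -> 0 < a ^ 2 + b ^ 2 ->
  x = acos d /\ sin x = sqrt (1 - d ^ 2) /\ 0 < sqrt (1 - d^2) /\
  cos t = c / sqrt (1 - d ^ 2) /\
  cos p = a / sqrt (a ^ 2 + b ^ 2) /\ sin p = b / sqrt (a ^ 2 + b ^ 2).
Proof. intros Ht Hx Hs Hab. unfold sph in Hs. injection Hs as H1 H2 H3 H4.
 pose proof (sin_ge_0 t (proj1 Ht) (proj2 Ht)) as St.
 pose proof (sin_ge_0 x (proj1 Hx) (proj2 Hx)) as Sx.
 pose proof (sin2_cos2 p). pose proof (sin2_cos2 t). pose proof (sin2_cos2 x).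
 unfold Rsqr in *.
 assert (Ex : x = acos d) by (subst d; rewrite acos_cos; auto).
 assert (Sx2 : sin x = sqrt (1 - d ^ 2)).
 { rewrite <- (sqrt_pow2 (sin x)) by auto. f_equal. subst d. lra. }
 assert (Pos : 0 < sin x).
 { destruct Sx as [Sx|Sx]; auto. exfalso. rewrite <- Sx in H1, H2. nra. }
 assert (Ptx : sin t * sin x = sqrt (a ^ 2 + b ^ 2)).
 { rewrite <- (sqrt_pow2 (sin t * sin x)) by (apply Rmult_le_pos; auto). f_equal. subst a b.
   replace ((sin t * cos p * sin x) ^ 2 + (sin t * sin p * sin x) ^ 2) with ((sin t * sin x)^2 * (sin p * sin p + cos p * cos p)) by ring. rewrite H. ring. }
 assert (Pos2 : 0 < sqrt (a ^ 2 + b ^ 2)) by (apply sqrt_lt_R0; auto).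
 split; auto. split; auto. split. rewrite <- Sx2; auto. split.
 rewrite <- Sx2. subst c. field. lra.
 assert (0 < sin t * sin x) by (rewrite Ptx; auto).
 assert (sin t <> 0) by (intro Z; rewrite Z in *; lra).
 rewrite <- Ptx. subst a b. split; field; split; lra.
Qed.

Lemma sph_exists a b c d : a^2+b^2+c^2+d^2 = 1 -> 0 < a^2+b^2 ->
  exists p t x, is_sph_coords (a, b, c, d) p t x.
Proof. intros Hs Hab.
 assert (Hd : -1 <= d <= 1) by nra.
 assert (HS2 : sqrt (1 - d^2) ^ 2 = 1 - d^2) by (apply pow2_sqrt; nra).
 assert (HS : 0 < sqrt (1 - d^2)) by (apply sqrt_lt_R0; nra).
 set (S := sqrt (1 - d^2)) in *.
 assert (Hc : -1 <= c / S <= 1).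
 { assert ((c/S)^2 <= 1).
   { replace ((c/S)^2) with (c^2 / S^2) by (field; lra). rewrite HS2.
     apply Rmult_le_reg_r with (1 - d^2). nra. field_simplify; nra. }
   nra. }
 assert (HT2 : sqrt (1 - (c/S)^2) ^ 2 = 1 - (c/S)^2) by (apply pow2_sqrt; nra).
 set (T := sqrt (1 - (c/S)^2)) in *.
 assert (HR2 : (T * S)^2 = a^2 + b^2).
 { replace ((T*S)^2) with (T^2 * S^2) by ring. rewrite HT2, HS2.
   replace ((c/S)^2) with (c^2 / S^2) by (field; lra). rewrite HS2.
   assert (1 - d^2 <> 0) by nra. field_simplify_eq; [nra|auto]. }
 assert (HT : 0 <= T) by apply sqrt_pos.
 assert (HR : 0 < T * S) by (destruct HT as [HT|HT]; [nra| rewrite <- HT in HR2; nra]).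
 assert (HT' : 0 < T) by nra.
 destruct (angle_exists (a / (T*S)) (b / (T*S))) as [p [Hp [Cp Sp]]].
 { replace ((a / (T*S))^2 + (b/(T*S))^2) with ((a^2+b^2)/(T*S)^2) by (field; lra).
   rewrite HR2. field. lra. }
 exists p, (acos (c/S)), (acos d).
 split. split; [exact Hp|]. pose proof (acos_bound (c/S)). pose proof (acos_bound d). lra.
 unfold sph. rewrite !sin_acos by auto. rewrite !cos_acos by auto.
 unfold Rsqr. replace (1 - c / S * (c / S)) with (1 - (c/S)^2) by ring.
 replace (1 - d * d) with (1 - d^2) by ring. fold S T. rewrite Cp, Sp.
 repeat f_equal; field; lra.
Qed.

Lemma Yfun_char k l m a b c d q : a^2+b^2+c^2+d^2 = 1 -> 0 < a^2+b^2 ->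
  cos q = a / sqrt (a^2+b^2) -> sin q = b / sqrt (a^2+b^2) ->
  Yfun k l m (a,b,c,d) = KK k l * ym m q * legK l (Z.abs_nat m) (c / sqrt (1 - d^2)) * Cf k l (acos d).
Proof. intros Hs Hab Hcq Hsq.
 unfold Yfun, sph_coords.
 match goal with |- context [epsilon ?i ?P] => 
   assert (HE : P (epsilon i P)) by (apply epsilon_spec; destruct (sph_exists a b c d Hs Hab) as [p [t [x Hx]]]; exists (p, t, x); exact Hx);
   destruct (epsilon i P) as [[p t] x] end.
 destruct HE as [[Hp [Ht Hx]] HE].
 destruct (sph_inj a b c d p t x Ht Hx HE Hab) as [E1 [E2 [E3 [E4 [E5 E6]]]]].
 rewrite Ysph_eq, E4, E1. rewrite (ym_cs m p q); auto; congruence.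
Qed.

Lemma atan_angle f a b : 0 < cos f * a + sin f * b ->
  0 < a^2 + b^2 /\
  cos (f + atan ((- sin f * a + cos f * b) / (cos f * a + sin f * b))) = a / sqrt (a^2+b^2) /\
  sin (f + atan ((- sin f * a + cos f * b) / (cos f * a + sin f * b))) = b / sqrt (a^2+b^2).
Proof. intros Hu.
 set (u := cos f * a + sin f * b) in *. set (v := - sin f * a + cos f * b).
 pose proof (sin2_cos2 f) as Hf. unfold Rsqr in Hf.
 assert (Huv : u^2 + v^2 = a^2 + b^2) by (unfold u, v; nra).
 assert (Hab : 0 < a^2+b^2) by nra.
 assert (Hr : 0 < sqrt (a^2+b^2)) by (apply sqrt_lt_R0; auto).
 assert (Hr2 : sqrt (a^2+b^2) ^ 2 = a^2+b^2) by (apply pow2_sqrt; lra).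
 assert (Hq : sqrt (1 + (v/u)²) = sqrt (a^2+b^2) / u).
 { rewrite <- (sqrt_pow2 (sqrt (a^2+b^2) / u)).
   f_equal. unfold Rsqr. replace ((sqrt (a ^ 2 + b ^ 2) / u) ^ 2) with (sqrt (a ^ 2 + b ^ 2)^2 / u^2) by (field; lra).
   rewrite Hr2, <- Huv. field. lra.
   apply Rlt_le, Rdiv_lt_0_compat; auto. }
 split; auto.
 rewrite cos_plus, sin_plus, cos_atan, sin_atan, Hq.
 split; unfold u, v in *; field_simplify_eq; try (split; lra); nra.
Qed.

Lemma stereo_sphere y1 y2 y3 :
  let n := y1^2+y2^2+y3^2 in
  (2*y1/(n+1))^2 + (2*y2/(n+1))^2 + (2*y3/(n+1))^2 + ((n-1)/(n+1))^2 = 1.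
Proof. intros n. assert (0 <= n) by (unfold n; nra). field_simplify_eq. unfold n; ring. lra. Qed.

Lemma is_derive_acos x : -1 < x < 1 -> is_derive acos x (-1 / sqrt (1 - x²)).
Proof. intros H. rewrite <- (derive_pt_acos x H). apply is_derive_Reals.
 unfold derive_pt. destruct (derivable_pt_acos x H) as [d Hd]. simpl. exact Hd. Qed.

Lemma DYphi k l m p t c : Derive (fun p => Ysph k l m p t c) p =
  KK k l * Derive (ym m) p * legK l (Z.abs_nat m) (cos t) * Cf k l c.
Proof. apply is_derive_unique.
 apply is_derive_ext with (fun p => KK k l * ym m p * legK l (Z.abs_nat m) (cos t) * Cf k l c).
 intros; rewrite Ysph_eq; auto.
 pose proof (Derive_correct _ _ (ym_ex_derive m p)) as H.
 auto_derive. apply ym_ex_derive. change (fun x => ym m x) with (ym m). ring.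
Qed.

Lemma DYtheta k l m p t c : 0 < sin t ->
  Derive (fun t => Ysph k l m p t c) t =
  KK k l * ym m p * (Derive (legK l (Z.abs_nat m)) (cos t) * - sin t) * Cf k l c.
Proof. intros Hs. apply is_derive_unique.
 apply is_derive_ext with (fun t => KK k l * ym m p * legK l (Z.abs_nat m) (cos t) * Cf k l c).
 intros; rewrite Ysph_eq; auto.
 assert (-1 < cos t < 1).
 { pose proof (sin2_cos2 t). unfold Rsqr in *. split; nra. }
 auto_derive. apply legK_ex_derive; auto. change (fun x => legK l (Z.abs_nat m) x) with (legK l (Z.abs_nat m)). ring.
Qed.

Lemma DYchi k l m p t c :
  Derive (fun c => Ysph k l m p t c) c =
  KK k l * ym m p * legK l (Z.abs_nat m) (cos t) * Derive (Cf k l) c.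
Proof. apply is_derive_unique.
 apply is_derive_ext with (fun c => KK k l * ym m p * legK l (Z.abs_nat m) (cos t) * Cf k l c).
 intros; rewrite Ysph_eq; auto.
 auto_derive. apply Cf_ex_derive. change (fun x => Cf k l x) with (Cf k l). ring.
Qed.

Ltac fix_eta := repeat match goal with |- context [Derive (fun x => ?f x) ?y] => change (fun x => f x) with f end.

Lemma prod4 (G A B C : R -> R) K g a b c :
  is_derive G 0 g -> is_derive A 0 a -> is_derive B 0 b -> is_derive C 0 c ->
  is_derive (fun t => G t * (K * A t * B t * C t)) 0
    (g * (K * A 0 * B 0 * C 0) + G 0 * (K * a * B 0 * C 0 + K * A 0 * b * C 0 + K * A 0 * B 0 * c)).
Proof. intros HG HA HB HC. auto_derive.
 repeat split; eexists; eauto.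
 fix_eta.
 rewrite (is_derive_unique _ _ _ HG), (is_derive_unique _ _ _ HA), (is_derive_unique _ _ _ HB), (is_derive_unique _ _ _ HC). ring.
Qed.

Section Core.
Variables (phi theta chi e1 e2 e3 : R) (X1 X2 X3 X4 : R -> R).
Hypothesis (Hst : 0 < sin theta) (Hsc : 0 < sin chi) (Hc : 0 <= chi <= PI).
Hypothesis (H1 : X1 0 = sin theta * cos phi * sin chi) (H2 : X2 0 = sin theta * sin phi * sin chi)
  (H3 : X3 0 = cos theta * sin chi) (H4 : X4 0 = cos chi).
Let w := 1 - cos chi.
Let s := X1 0 * e1 + X2 0 * e2 + X3 0 * e3.
Hypothesis (D1 : is_derive X1 0 (w * e1 - X1 0 * s)) (D2 : is_derive X2 0 (w * e2 - X2 0 * s))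
  (D3 : is_derive X3 0 (w * e3 - X3 0 * s)) (D4 : is_derive X4 0 (w * s)).

Lemma dPhi : is_derive (fun t => phi + atan ((- sin phi * X1 t + cos phi * X2 t) / (cos phi * X1 t + sin phi * X2 t))) 0
  (w * (- sin phi * e1 + cos phi * e2) / (sin theta * sin chi)).
Proof.
 pose proof (sin2_cos2 phi) as Tp. unfold Rsqr in Tp.
 assert (U0 : cos phi * X1 0 + sin phi * X2 0 = sin theta * sin chi).
 { rewrite H1, H2. transitivity (sin theta * sin chi * (sin phi * sin phi + cos phi * cos phi)). ring. rewrite Tp; ring. }
 auto_derive.
 - repeat split; try (eexists; eauto). rewrite U0. apply Rgt_not_eq. apply Rmult_lt_0_compat; auto.
 - fix_eta. rewrite (is_derive_unique _ _ _ D1), (is_derive_unique _ _ _ D2), U0.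
   unfold s, w. rewrite ?H1, ?H2, ?H3, ?H4. field. split; [lra|split;[lra|]].
   match goal with |- _ + ?c * ?c <> 0 => replace c with 0 by ring end.
   rewrite Rmult_0_l, Rplus_0_r. apply Rgt_not_eq. repeat apply Rmult_lt_0_compat; auto.
Qed.

Lemma Sq : sqrt (1 - cos chi ^ 2) = sin chi.
Proof. rewrite <- (sqrt_pow2 (sin chi)) by lra. f_equal.
 pose proof (sin2_cos2 chi). unfold Rsqr in *. nra. Qed.

Lemma dU : is_derive (fun t => X3 t / sqrt (1 - X4 t ^ 2)) 0
  (- sin theta * (w / sin chi) * (cos phi * cos theta * e1 + sin phi * cos theta * e2 - sin theta * e3)).
Proof.
 pose proof (sin2_cos2 phi) as Tp. pose proof (sin2_cos2 theta) as Tt. pose proof (sin2_cos2 chi) as Tc.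
 unfold Rsqr in *. pose proof Sq as Sq'.
 replace (1 - cos chi ^ 2) with (1 + - (cos chi * (cos chi * 1))) in Sq' by ring.
 auto_derive.
 - repeat split; try (eexists; eauto); rewrite H4; [nra|]. rewrite Sq'. lra.
 - fix_eta. rewrite (is_derive_unique _ _ _ D3), (is_derive_unique _ _ _ D4).
   unfold s, w. rewrite ?H1, ?H2, ?H3, ?H4. rewrite Sq'. field_simplify_eq; [|lra].
   replace (sin theta ^ 2) with (1 - cos theta ^ 2) by nra.
   replace (sin chi ^ 3) with (sin chi * (1 - cos chi ^ 2)) by nra. ring.
Qed.

Lemma dAc : is_derive (fun t => acos (X4 t)) 0
  (- w * (sin theta * cos phi * e1 + sin theta * sin phi * e2 + cos theta * e3)).
Proof.
 pose proof (sin2_cos2 chi) as Tc. unfold Rsqr in *.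
 assert (Hr : -1 < X4 0 < 1) by (rewrite H4; split; nra).
 eapply is_derive_ext. intros t; reflexivity.
 replace (- w * (sin theta * cos phi * e1 + sin theta * sin phi * e2 + cos theta * e3))
   with (scal (w * s) (-1 / sqrt (1 - (X4 0)²))).
 apply (is_derive_comp acos X4). apply is_derive_acos; auto. auto.
 unfold scal; simpl; unfold mult; simpl. unfold Rsqr. rewrite H4.
 replace (1 - cos chi * cos chi) with (1 - cos chi ^ 2) by ring. rewrite Sq.
 unfold s. rewrite H1, H2, H3. field. lra.
Qed.

Lemma core_deriv k l m (G : R -> R) g : is_derive G 0 g ->
  is_derive (fun t => G t * (KK k l * ym m (phi + atan ((- sin phi * X1 t + cos phi * X2 t) / (cos phi * X1 t + sin phi * X2 t)))
     * legK l (Z.abs_nat m) (X3 t / sqrt (1 - X4 t ^ 2)) * Cf k l (acos (X4 t)))) 0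
   (g * Ysph k l m phi theta chi + G 0 * (let '(V1, V2, V3) := Vvec k l m phi theta chi in V1 * e1 + V2 * e2 + V3 * e3)).
Proof. intros HG.
 pose proof (sin2_cos2 theta) as Tt. unfold Rsqr in Tt.
 assert (Phi0 : phi + atan ((- sin phi * X1 0 + cos phi * X2 0) / (cos phi * X1 0 + sin phi * X2 0)) = phi).
 { rewrite H1, H2. replace (- sin phi * (sin theta * cos phi * sin chi) + cos phi * (sin theta * sin phi * sin chi)) with 0 by ring.
   unfold Rdiv; rewrite Rmult_0_l, atan_0; ring. }
 assert (U0 : X3 0 / sqrt (1 - X4 0 ^ 2) = cos theta).
 { rewrite H4, Sq, H3. field. lra. }
 assert (Ac0 : acos (X4 0) = chi) by (rewrite H4; apply acos_cos; auto).
 assert (HA0 : is_derive (ym m) (phi + atan ((- sin phi * X1 0 + cos phi * X2 0) / (cos phi * X1 0 + sin phi * X2 0))) (Derive (ym m) phi))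
   by (rewrite Phi0; apply Derive_correct, ym_ex_derive).
 pose proof (is_derive_comp _ _ 0 _ _ HA0 dPhi) as dA.
 assert (HcT : -1 < cos theta < 1) by (split; nra).
 assert (HB0 : is_derive (legK l (Z.abs_nat m)) (X3 0 / sqrt (1 - X4 0 ^ 2)) (Derive (legK l (Z.abs_nat m)) (cos theta)))
   by (rewrite U0; apply Derive_correct, legK_ex_derive; auto).
 pose proof (is_derive_comp _ _ 0 _ _ HB0 dU) as dB.
 assert (HC0 : is_derive (Cf k l) (acos (X4 0)) (Derive (Cf k l) chi))
   by (rewrite Ac0; apply Derive_correct, Cf_ex_derive).
 pose proof (is_derive_comp _ _ 0 _ _ HC0 dAc) as dC.
 pose proof (prod4 G _ _ _ (KK k l) _ _ _ _ HG dA dB dC) as HP.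
 eapply is_derive_ext; [intros t; reflexivity|].
 replace (g * Ysph k l m phi theta chi + G 0 * (let '(V1, V2, V3) := Vvec k l m phi theta chi in V1 * e1 + V2 * e2 + V3 * e3)) with
  (g * (KK k l * ym m (phi + atan ((- sin phi * X1 0 + cos phi * X2 0) / (cos phi * X1 0 + sin phi * X2 0)))
     * legK l (Z.abs_nat m) (X3 0 / sqrt (1 - X4 0 ^ 2)) * Cf k l (acos (X4 0))) + G 0 * 
    (KK k l * (scal (w * (- sin phi * e1 + cos phi * e2) / (sin theta * sin chi)) (Derive (ym m) phi)) * legK l (Z.abs_nat m) (X3 0 / sqrt (1 - X4 0 ^ 2)) * Cf k l (acos (X4 0))
     + KK k l * ym m (phi + atan ((- sin phi * X1 0 + cos phi * X2 0) / (cos phi * X1 0 + sin phi * X2 0))) * (scal (- sin theta * (w / sin chi) * (cos phi * cos theta * e1 + sin phi * cos theta * e2 - sin theta * e3)) (Derive (legK l (Z.abs_nat m)) (cos theta))) * Cf k l (acos (X4 0))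
     + KK k l * ym m (phi + atan ((- sin phi * X1 0 + cos phi * X2 0) / (cos phi * X1 0 + sin phi * X2 0))) * legK l (Z.abs_nat m) (X3 0 / sqrt (1 - X4 0 ^ 2)) * (scal (- w * (sin theta * cos phi * e1 + sin theta * sin phi * e2 + cos theta * e3)) (Derive (Cf k l) chi)))).
 exact HP.
 rewrite Phi0, U0, Ac0. unfold scal; simpl; unfold mult; simpl.
 cbv beta iota zeta delta [Vvec]. rewrite DYphi, DYtheta, DYchi, Ysph_eq by auto.
 unfold w. field. split; lra.
Qed.

End Core.

Lemma loc_pos (u : R -> R) : ex_derive u 0 -> 0 < u 0 -> locally 0 (fun t => 0 < u t).
Proof. intros Hd Hp.
 assert (Hc : continuity_pt u 0) by (apply continuity_pt_filterlim; apply (@ex_derive_continuous R_AbsRing R_NormedModule); exact Hd).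
 apply continuity_pt_locally with (eps := mkposreal _ Hp) in Hc.
 eapply filter_imp; [|exact Hc]. intros t Ht. simpl in Ht.
 apply Rabs_def2 in Ht. lra.
Qed.

Lemma main_dir k l m x1 x2 x3 e1 e2 e3 phi theta chi :
  x1^2 + x2^2 <> 0 ->
  is_sph_coords (inv_stereo x1 x2 x3) phi theta chi ->
  is_derive (fun t => Wfun k l m (x1 + e1*t) (x2+e2*t) (x3+e3*t)) 0
   (sqrt (1 - (x1^2+x2^2+x3^2-1)/(x1^2+x2^2+x3^2+1)) *
     ((let '(V1,V2,V3) := Vvec k l m phi theta chi in V1*e1+V2*e2+V3*e3)
      - /2 * Ysph k l m phi theta chi *
        (2*x1/(x1^2+x2^2+x3^2+1)*e1 + 2*x2/(x1^2+x2^2+x3^2+1)*e2 + 2*x3/(x1^2+x2^2+x3^2+1)*e3))).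
Proof.
 intros Hx [[Hp [Ht Hc]] Hs].
 unfold inv_stereo, sph in Hs. cbv zeta in Hs. injection Hs as H1 H2 H3 H4.
 set (n0 := x1^2+x2^2+x3^2) in *.
 assert (Hn0 : x1 * (x1 * 1) + x2 * (x2 * 1) + x3 * (x3 * 1) = n0) by (unfold n0; ring).
 rewrite Hn0 in H1, H2, H3, H4.
 assert (Hn : 0 <= n0) by (unfold n0; nra).
 assert (Hxx : 0 < x1^2+x2^2) by (assert (0 <= x1^2) by nra; assert (0 <= x2^2) by nra; lra).
 pose proof (sin_ge_0 theta (proj1 Ht) (proj2 Ht)) as St.
 pose proof (sin_ge_0 chi (proj1 Hc) (proj2 Hc)) as Sc.
 assert (Hpos : 0 < (sin theta * sin chi)^2).
 { pose proof (sin2_cos2 phi) as Tp. unfold Rsqr in Tp.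
   replace ((sin theta * sin chi)^2) with ((sin theta * cos phi * sin chi)^2 + (sin theta * sin phi * sin chi)^2)
     by (transitivity ((sin theta * sin chi)^2 * (sin phi * sin phi + cos phi * cos phi)); [ring| rewrite Tp; ring]).
   rewrite H1, H2. replace ((2 * x1 / (n0 + 1)) ^ 2 + (2 * x2 / (n0 + 1)) ^ 2) with (4 * (x1^2+x2^2) / (n0+1)^2) by (field; lra).
   apply Rdiv_lt_0_compat; nra. }
 assert (Hst : 0 < sin theta) by (destruct St as [St|St]; auto; rewrite <- St in Hpos; nra).
 assert (Hsc : 0 < sin chi) by (destruct Sc as [Sc|Sc]; auto; rewrite <- Sc in Hpos; nra).
 pose (nn := fun t => (x1+e1*t)^2 + (x2+e2*t)^2 + (x3+e3*t)^2).
 pose (X1 := fun t => 2*(x1+e1*t)/(nn t + 1)).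
 pose (X2 := fun t => 2*(x2+e2*t)/(nn t + 1)).
 pose (X3 := fun t => 2*(x3+e3*t)/(nn t + 1)).
 pose (X4 := fun t => (nn t - 1)/(nn t + 1)).
 assert (N0 : nn 0 = n0) by (unfold nn, n0; ring).
 assert (E1 : X1 0 = sin theta * cos phi * sin chi) by (rewrite H1; unfold X1; rewrite N0; f_equal; ring).
 assert (E2 : X2 0 = sin theta * sin phi * sin chi) by (rewrite H2; unfold X2; rewrite N0; f_equal; ring).
 assert (E3 : X3 0 = cos theta * sin chi) by (rewrite H3; unfold X3; rewrite N0; f_equal; ring).
 assert (E4 : X4 0 = cos chi) by (rewrite H4; unfold X4; rewrite N0; f_equal; ring).
 assert (D1 : is_derive X1 0 ((1 - cos chi) * e1 - X1 0 * (X1 0 * e1 + X2 0 * e2 + X3 0 * e3))).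
 { rewrite H4. unfold X1, X2, X3, nn. auto_derive; rewrite ?Rmult_0_r, ?Rplus_0_r; rewrite ?Hn0; fold n0.
   lra. field. lra. }
 assert (D2 : is_derive X2 0 ((1 - cos chi) * e2 - X2 0 * (X1 0 * e1 + X2 0 * e2 + X3 0 * e3))).
 { rewrite H4. unfold X1, X2, X3, nn. auto_derive; rewrite ?Rmult_0_r, ?Rplus_0_r; rewrite ?Hn0; fold n0.
   lra. field. lra. }
 assert (D3 : is_derive X3 0 ((1 - cos chi) * e3 - X3 0 * (X1 0 * e1 + X2 0 * e2 + X3 0 * e3))).
 { rewrite H4. unfold X1, X2, X3, nn. auto_derive; rewrite ?Rmult_0_r, ?Rplus_0_r; rewrite ?Hn0; fold n0.
   lra. field. lra. }
 assert (D4 : is_derive X4 0 ((1 - cos chi) * (X1 0 * e1 + X2 0 * e2 + X3 0 * e3))).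
 { rewrite H4. unfold X1, X2, X3, X4, nn. auto_derive; rewrite ?Rmult_0_r, ?Rplus_0_r; rewrite ?Hn0; fold n0.
   lra. field. lra. }
 pose (G := fun t => sqrt (2 / (nn t + 1))).
 set (q := sqrt (2 / (n0 + 1))).
 assert (Hq2 : q * q = 2 / (n0 + 1)) by (apply sqrt_sqrt; apply Rlt_le, Rdiv_lt_0_compat; lra).
 assert (Hq : 0 < q) by (apply sqrt_lt_R0, Rdiv_lt_0_compat; lra).
 assert (G0 : G 0 = q) by (unfold G; rewrite N0; reflexivity).
 assert (DG : is_derive G 0 (- / 2 * (X1 0 * e1 + X2 0 * e2 + X3 0 * e3) * q)).
 { unfold X1, X2, X3, G, nn. auto_derive; rewrite ?Rmult_0_r, ?Rplus_0_r; rewrite ?Hn0; fold n0.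
   repeat split; try (intro; lra); try (apply Rdiv_lt_0_compat; lra).
   change (sqrt (2 * / (n0 + 1))) with q.
   match goal with |- _ = - / 2 * ?S * q => replace (- / 2 * S * q) with (- S * (q * q) / (2 * q)) by (field; lra) end.
   rewrite Hq2. field. lra. }
 pose proof (core_deriv phi theta chi e1 e2 e3 X1 X2 X3 X4 Hst Hsc Hc E1 E2 E3 E4 D1 D2 D3 D4 k l m G _ DG) as HC.
 assert (Hu : locally 0 (fun t => 0 < cos phi * X1 t + sin phi * X2 t)).
 { assert (Hd : ex_derive (fun t => cos phi * X1 t + sin phi * X2 t) 0).
   { unfold X1, X2, nn. auto_derive. rewrite ?Rmult_0_r, ?Rplus_0_r. rewrite Hn0. repeat split; lra. }
   assert (Hu0 : 0 < cos phi * X1 0 + sin phi * X2 0).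
   { rewrite E1, E2. pose proof (sin2_cos2 phi) as Tp. unfold Rsqr in Tp.
     replace (cos phi * (sin theta * cos phi * sin chi) + sin phi * (sin theta * sin phi * sin chi))
       with (sin theta * sin chi * (sin phi * sin phi + cos phi * cos phi)) by ring.
     rewrite Tp, Rmult_1_r. apply Rmult_lt_0_compat; auto. }
   exact (loc_pos _ Hd Hu0). }
 eapply is_derive_ext_loc.
 - eapply filter_imp; [|exact Hu]. intros t Htt. simpl.
   unfold Wfun. change (inv_stereo (x1 + e1 * t) (x2 + e2 * t) (x3 + e3 * t)) with (X1 t, X2 t, X3 t, X4 t).
   destruct (atan_angle phi (X1 t) (X2 t) Htt) as [Hab [Hcq Hsq]].
   assert (Hsph : X1 t ^2 + X2 t ^2 + X3 t ^2 + X4 t ^2 = 1) by exact (stereo_sphere (x1+e1*t) (x2+e2*t) (x3+e3*t)).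
   rewrite (Yfun_char k l m (X1 t) (X2 t) (X3 t) (X4 t) _ Hsph Hab Hcq Hsq). reflexivity.
 - replace (sqrt (1 - (n0 - 1) / (n0 + 1))) with q.
   2: { unfold q. f_equal. field. lra. }
   rewrite G0, E1, E2, E3, H1, H2, H3 in HC.
   destruct (Vvec k l m phi theta chi) as [[V1 V2] V3].
   match type of HC with is_derive _ _ ?v => replace (q * (V1 * e1 + V2 * e2 + V3 * e3 - / 2 * Ysph k l m phi theta chi *
      (2 * x1 / (n0 + 1) * e1 + 2 * x2 / (n0 + 1) * e2 + 2 * x3 / (n0 + 1) * e3))) with v by ring end.
   exact HC.
Qed.

Lemma coord k l m x1 x2 x3 e1 e2 e3 phi theta chi a0 (f : R -> R) :
  x1^2 + x2^2 <> 0 ->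
  is_sph_coords (inv_stereo x1 x2 x3) phi theta chi ->
  (forall t, Wfun k l m (x1 + e1*(t - a0)) (x2+e2*(t - a0)) (x3+e3*(t - a0)) = f t) ->
  is_derive f a0
   (sqrt (1 - (x1^2+x2^2+x3^2-1)/(x1^2+x2^2+x3^2+1)) *
     ((let '(V1,V2,V3) := Vvec k l m phi theta chi in V1*e1+V2*e2+V3*e3)
      - /2 * Ysph k l m phi theta chi *
        (2*x1/(x1^2+x2^2+x3^2+1)*e1 + 2*x2/(x1^2+x2^2+x3^2+1)*e2 + 2*x3/(x1^2+x2^2+x3^2+1)*e3))).
Proof. intros Hx Hs Hf.
 pose proof (main_dir k l m x1 x2 x3 e1 e2 e3 phi theta chi Hx Hs) as H.
 set (v := sqrt _ * _) in *.
 assert (H' : is_derive (fun t => Wfun k l m (x1 + e1*t) (x2+e2*t) (x3+e3*t)) (a0 - a0) v)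
   by (replace (a0 - a0) with 0 by ring; exact H).
 assert (Hg : is_derive (fun t : R => t - a0) a0 1) by (auto_derive; auto; ring).
 pose proof (is_derive_comp (fun t => Wfun k l m (x1 + e1*t) (x2+e2*t) (x3+e3*t)) (fun t => t - a0) a0 v 1 H' Hg) as HC.
 eapply is_derive_ext. exact Hf.
 replace v with (scal 1 v) by (unfold scal; simpl; unfold mult; simpl; ring). exact HC.
Qed.

Theorem proposition5p1 (k l : nat) (m : Z) (x1 x2 x3 : R)
  (phi theta chi : R) :
  (l <= k)%nat -> (- Z.of_nat l <= m <= Z.of_nat l)%Z ->
  x1 ^ 2 + x2 ^ 2 <> 0 ->
  is_sph_coords (inv_stereo x1 x2 x3) phi theta chi ->
  let '(xi1, xi2, xi3, xi4) := inv_stereo x1 x2 x3 in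
  let '(V1, V2, V3) := Vvec k l m phi theta chi in
  let Y := Ysph k l m phi theta chi in
  let c := sqrt (1 - xi4) in
  is_derive (fun t => Wfun k l m t x2 x3) x1 (c * (V1 - / 2 * Y * xi1)) /\
  is_derive (fun t => Wfun k l m x1 t x3) x2 (c * (V2 - / 2 * Y * xi2)) /\
  is_derive (fun t => Wfun k l m x1 x2 t) x3 (c * (V3 - / 2 * Y * xi3)).
Proof.
 intros _ _ Hx Hs.
 pose proof (coord k l m x1 x2 x3 1 0 0 phi theta chi x1 (fun t => Wfun k l m t x2 x3) Hx Hs) as C1.
 pose proof (coord k l m x1 x2 x3 0 1 0 phi theta chi x2 (fun t => Wfun k l m x1 t x3) Hx Hs) as C2.
 pose proof (coord k l m x1 x2 x3 0 0 1 phi theta chi x3 (fun t => Wfun k l m x1 x2 t) Hx Hs) as C3.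
 unfold inv_stereo. cbv zeta.
 destruct (Vvec k l m phi theta chi) as [[V1 V2] V3].
 split; [|split].
 - eapply is_derive_ext; [intros t; reflexivity|].
   match goal with |- is_derive _ _ ?v => replace v with (sqrt (1 - (x1^2+x2^2+x3^2-1)/(x1^2+x2^2+x3^2+1)) *
     ((V1*1+V2*0+V3*0) - /2 * Ysph k l m phi theta chi *
        (2*x1/(x1^2+x2^2+x3^2+1)*1 + 2*x2/(x1^2+x2^2+x3^2+1)*0 + 2*x3/(x1^2+x2^2+x3^2+1)*0))) by ring end.
   apply C1. intros t. f_equal; ring.
 - eapply is_derive_ext; [intros t; reflexivity|].
   match goal with |- is_derive _ _ ?v => replace v with (sqrt (1 - (x1^2+x2^2+x3^2-1)/(x1^2+x2^2+x3^2+1)) *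
     ((V1*0+V2*1+V3*0) - /2 * Ysph k l m phi theta chi *
        (2*x1/(x1^2+x2^2+x3^2+1)*0 + 2*x2/(x1^2+x2^2+x3^2+1)*1 + 2*x3/(x1^2+x2^2+x3^2+1)*0))) by ring end.
   apply C2. intros t. f_equal; ring.
 - eapply is_derive_ext; [intros t; reflexivity|].
   match goal with |- is_derive _ _ ?v => replace v with (sqrt (1 - (x1^2+x2^2+x3^2-1)/(x1^2+x2^2+x3^2+1)) *
     ((V1*0+V2*0+V3*1) - /2 * Ysph k l m phi theta chi *
        (2*x1/(x1^2+x2^2+x3^2+1)*0 + 2*x2/(x1^2+x2^2+x3^2+1)*0 + 2*x3/(x1^2+x2^2+x3^2+1)*1))) by ring end.
   apply C3. intros t. f_equal; ring.
Qed.
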